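(* Let $A$ be a partially ordered set and let $G,G'$ be games over $A$. If $G\equiv G'$ and both $G$ and $G'$ are in canonical form, then $G=G'$ (they are literally the same game).
   Context: Games over a poset $A$ are defined inductively: for each $a\in A$ there is an atomic game $[a]$, which has no options; and if $L$ and $R$ are non-empty sets of games, then $\{L\mid R\}$ is a composite game with left options $L$ and right options $R$; two games are equal if both are atomic with equal atoms, or both are composite with equal sets of left options and equal sets of right options. The relations $\le$ and $\lhd$ are defined by simultaneous recursion: $G\le H$ iff (1) every left option $G^L$ of $G$ satisfies $G^L\lhd H$, (2) every right option $H^R$ of $H$ satisfies $G\lhd H^R$, and (3) if $G$ or $H$ is atomic then $G\lhd H$; and $G\lhd H$ iff (1) some right option $G^R$ of $G$ satisfies $G^R\le H$, or (2) some left option $H^L$ of $H$ satisfies $G\le H^L$, or (3) $G=[a]$, $H=[b]$ are atomic and $a\le b$. $G\equiv H$ means $G\le H$ and $H\le G$. Canonical form: among distinct left options $H,K$ of $G$, $K$ is dominated if $K\le H$; among distinct right options $H,K$, $K$ is dominated if $H\le K$. A left option $H$ of $G$ is reversible if $H$ has a right option $K$ with $K\le G$; a right option $H$ of $G$ is reversible if $H$ has a left option $K$ with $G\le K$. An option $H$ of $G$ is a passing option if $H\equiv G$. $G$ is in canonical form if it has no dominated, reversible or passing options and all its options are in canonical form. *)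

(* Defs.v *)
From HB Require Import structures.
From mathcomp Require Import all_boot all_order.
Set Implicit Arguments. Unset Strict Implicit. Unset Printing Implicit Defensive.
Import Order.Theory.

(* The *set* of left options is the image of L; two games are identical
   (the paper's "G = H") iff [gident G H] holds (extensional set equality,
   recursively), see below. *)
Inductive game (T : Type) : Type :=
| Atom : T -> game T
| Comp : forall (I J : Type), inhabited I -> inhabited J ->
         (I -> game T) -> (J -> game T) -> game T.

Arguments Atom {T} _.
Arguments Comp {T} I J _ _ _ _.

Section Games.
Context {d : Order.disp_t} {A : porderType d}.

Definition is_atom (G : game A) : Prop :=
  match G with Atom _ => True | Comp _ _ _ _ _ _ => False end.

Fixpoint gident (G H : game A) {struct G} : Prop :=
  match G, H with
  | Atom a, Atom b => a = b
  | Comp I0 J0 _ _ L R, Comp I1 J1 _ _ L' R' =>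
      (forall i, exists i', gident (L i) (L' i')) /\
      (forall i', exists i, gident (L i) (L' i')) /\
      (forall j, exists j', gident (R j) (R' j')) /\
      (forall j', exists j, gident (R j) (R' j'))
  | _, _ => False
  end.

(* Simultaneous recursion: grel G H = (G <= H, G <| H). *)
Fixpoint grel (G : game A) : game A -> Prop * Prop :=
  fix grelH (H : game A) : Prop * Prop :=
  let lf : Prop :=
    (match G with
     | Comp _ _ _ _ _ R => exists j, fst (grel (R j) H)
     | Atom _ => False end)
    \/ (match H with
        | Comp _ _ _ _ L' _ => exists i, fst (grelH (L' i))
        | Atom _ => False end)
    \/ (match G, H with
        | Atom a, Atom b => (a <= b)%O
        | _, _ => False end) in
  let le : Prop :=
    (match G with
     | Comp _ _ _ _ L _ => forall i, snd (grel (L i) H)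
     | Atom _ => True end)
    /\ (match H with
        | Comp _ _ _ _ _ R' => forall j, snd (grelH (R' j))
        | Atom _ => True end)
    /\ ((is_atom G \/ is_atom H) -> lf) in
  (le, lf).

Definition gle (G H : game A) : Prop := fst (grel G H).
Definition glf (G H : game A) : Prop := snd (grel G H).
Definition gequiv (G H : game A) : Prop := gle G H /\ gle H G.

(* Canonical form: no dominated, reversible or passing options, and all
   options in canonical form. "Distinct" options = not identical games. *)
Fixpoint canonical (G : game A) : Prop :=
  match G with
  | Atom _ => True
  | Comp I0 J0 _ _ L R =>
      (forall i, canonical (L i)) /\ (forall j, canonical (R j)) /\
      (forall i k, ~ gident (L k) (L i) -> ~ gle (L k) (L i)) /\
      (forall j k, ~ gident (R k) (R j) -> ~ gle (R j) (R k)) /\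
      (forall i, match L i with
                 | Comp _ _ _ _ _ LR => forall r, ~ gle (LR r) G
                 | Atom _ => True end) /\
      (forall j, match R j with
                 | Comp _ _ _ _ RL _ => forall l, ~ gle G (RL l)
                 | Atom _ => True end) /\
      (forall i, ~ gequiv (L i) G) /\
      (forall j, ~ gequiv (R j) G)
  end.

End Games.

(* Main.v *)
Require Import Defs.
From mathcomp Require Import all_boot all_order.
From Stdlib Require Import Classical.
Import Order.Theory.

Section G.
Context {d : Order.disp_t} {A : porderType d}.
Implicit Types (G H K X Y Z : game A).

Definition lefts (G : game A) : game A -> Prop :=
  match G with Atom _ => fun _ => False | Comp _ _ _ _ L _ => fun X => exists i, L i = X end.
Definition rights (G : game A) : game A -> Prop :=
  match G with Atom _ => fun _ => False | Comp _ _ _ _ _ R => fun X => exists j, R j = X end.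
Definition atle (G H : game A) : Prop :=
  match G, H with Atom a, Atom b => (a <= b)%O | _, _ => False end.

Lemma grel_unfold (G H : game A) : Defs.grel G H =
  (((match G with
     | Comp _ _ _ _ L _ => forall i, glf (L i) H
     | Atom _ => True end)
    /\ (match H with
        | Comp _ _ _ _ _ R' => forall j, glf G (R' j)
        | Atom _ => True end)
    /\ ((is_atom G \/ is_atom H) ->
    ((match G with
     | Comp _ _ _ _ _ R => exists j, gle (R j) H
     | Atom _ => False end)
    \/ (match H with
        | Comp _ _ _ _ L' _ => exists i, gle G (L' i)
        | Atom _ => False end)
    \/ (match G, H with
        | Atom a, Atom b => (a <= b)%O
        | _, _ => False end)))),
    ((match G with
     | Comp _ _ _ _ _ R => exists j, gle (R j) H
     | Atom _ => False end)
    \/ (match H with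
        | Comp _ _ _ _ L' _ => exists i, gle G (L' i)
        | Atom _ => False end)
    \/ (match G, H with
        | Atom a, Atom b => (a <= b)%O
        | _, _ => False end))).
Proof. destruct G; destruct H; reflexivity. Qed.

Lemma gle_eq G H : gle G H <->
  (forall X, lefts G X -> glf X H) /\ (forall Y, rights H Y -> glf G Y) /\
  (is_atom G \/ is_atom H -> glf G H).
Proof.
  change (gle G H) with (fst (Defs.grel G H)); change (glf G H) with (snd (Defs.grel G H)); rewrite !grel_unfold.
  destruct G as [a|I J hI hJ L R]; destruct H as [b|I' J' hI' hJ' L' R']; simpl; split.
  all: try (intros [H1 [H2 H3]]; split; [ first [intros X [i <-]; apply H1 | intros X []]
     | split; [ first [intros Y [j <-]; apply H2 | intros Y []] | exact H3]]).
  all: intros [K1 [K2 K3]]; split.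
  all: try exact Logic.I.
  all: try (intros i; apply K1; exists i; reflexivity).
  all: split; [|exact K3].
  all: try exact Logic.I.
  all: try (intros j; apply K2; exists j; reflexivity).
Qed.

Lemma glf_eq G H : glf G H <->
  (exists X, rights G X /\ gle X H) \/ (exists Y, lefts H Y /\ gle G Y) \/ atle G H.
Proof.
  change (glf G H) with (snd (Defs.grel G H)); rewrite grel_unfold.
  destruct G as [a|I J hI hJ L R]; destruct H as [b|I' J' hI' hJ' L' R']; simpl.
  all: firstorder (subst; eauto).
Qed.

Lemma gle_atoms (a b : A) : gle (Atom a) (Atom b) <-> (a <= b)%O.
Proof.
  split.
  - intro h; apply gle_eq in h; destruct h as [_ [_ h]].
    specialize (h (or_introl Logic.I)); apply glf_eq in h.
    destruct h as [[X [[] _]]|[[Y [[] _]]|h]]; exact h.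
  - intro h; apply gle_eq; split; [intros X []|split; [intros Y []|]].
    intros _; apply glf_eq; right; right; exact h.
Qed.

Lemma gind (P : game A -> Prop) :
  (forall G, (forall X, lefts G X -> P X) -> (forall X, rights G X -> P X) -> P G) ->
  forall G, P G.
Proof.
  intros HP G; induction G as [a|I J hI hJ L IHL R IHR]; apply HP; simpl.
  all: try (intros X []; fail).
  - intros X [i <-]; auto.
  - intros X [i <-]; auto.
Qed.

Definition Ptr (G H K : game A) :=
  (gle G H -> gle H K -> gle G K) /\ (gle G H -> glf H K -> glf G K) /\
  (glf G H -> gle H K -> glf G K).

Lemma trans_all G H K : Ptr G H K.
Proof.
  revert H K; induction G as [G IGL IGR] using gind; intros H.
  induction H as [H IHL IHR] using gind; intros K.
  induction K as [K IKL IKR] using gind.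
  assert (T2 : gle G H -> glf H K -> glf G K).
  { intros gGH fHK. apply glf_eq in fHK.
    destruct fHK as [[X [rX gXK]]|[[Y [lY gHY]]|hat]].
    - apply gle_eq in gGH. destruct gGH as [_ [g2 _]].
      exact (proj2 (proj2 (IHR X rX K)) (g2 X rX) gXK).
    - apply glf_eq. right; left. exists Y; split; auto.
      exact (proj1 (IKL Y lY) gGH gHY).
    - destruct H as [b|]; [|destruct hat]. destruct K as [c|]; [|destruct hat].
      simpl in hat.
      apply gle_eq in gGH. destruct gGH as [_ [_ g3]].
      specialize (g3 (or_intror Logic.I)).
      apply glf_eq in g3. destruct g3 as [[X [rX gXH]]|[[Y [[] _]]|hat2]].
      + apply glf_eq; left; exists X; split; auto.
        apply (proj1 (IGR X rX (Atom b) (Atom c)) gXH). apply gle_atoms; exact hat.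
      + destruct G as [a|]; [|destruct hat2]. apply glf_eq; right; right.
        simpl in *. exact (le_trans hat2 hat). }
  assert (T3 : glf G H -> gle H K -> glf G K).
  { intros fGH gHK. apply glf_eq in fGH.
    destruct fGH as [[X [rX gXH]]|[[Y [lY gGY]]|hat]].
    - apply glf_eq; left; exists X; split; auto. exact (proj1 (IGR X rX H K) gXH gHK).
    - apply gle_eq in gHK; destruct gHK as [h1 _].
      exact (proj1 (proj2 (IHL Y lY K)) gGY (h1 Y lY)).
    - destruct G as [a|]; [|destruct hat]; destruct H as [b|]; [|destruct hat].
      simpl in hat.
      apply gle_eq in gHK. destruct gHK as [_ [_ h3]].
      specialize (h3 (or_introl Logic.I)).
      apply glf_eq in h3. destruct h3 as [[X [[] _]]|[[Z [lZ gHZ]]|hat2]].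
      + apply glf_eq; right; left; exists Z; split; auto.
        apply (proj1 (IKL Z lZ)); [apply gle_atoms; exact hat| exact gHZ].
      + destruct K as [c|]; [|destruct hat2]. apply glf_eq; right; right.
        simpl in *; exact (le_trans hat hat2). }
  split; [|split; assumption].
  intros gGH gHK. apply gle_eq. split; [|split].
  - intros X lX. apply gle_eq in gGH.
    exact (proj2 (proj2 (IGL X lX H K)) (proj1 gGH X lX) gHK).
  - intros Z rZ.
    exact (proj1 (proj2 (IKR Z rZ)) gGH (proj1 (proj2 (proj1 (gle_eq _ _) gHK)) Z rZ)).
  - intros [aG|aK].
    + apply T3; auto. apply (proj2 (proj2 (proj1 (gle_eq _ _) gGH))). left; exact aG.
    + apply T2; auto. apply (proj2 (proj2 (proj1 (gle_eq _ _) gHK))). right; exact aK.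
Qed.

Lemma gle_trans G H K : gle G H -> gle H K -> gle G K.
Proof. exact (proj1 (trans_all G H K)). Qed.
Lemma gle_glf G H K : gle G H -> glf H K -> glf G K.
Proof. exact (proj1 (proj2 (trans_all G H K))). Qed.
Lemma glf_gle G H K : glf G H -> gle H K -> glf G K.
Proof. exact (proj2 (proj2 (trans_all G H K))). Qed.

Lemma gle_refl G : gle G G.
Proof.
  induction G as [G IL IR] using gind.
  apply gle_eq; split; [|split].
  - intros X lX. apply glf_eq. right; left. exists X; split; auto.
  - intros Y rY. apply glf_eq. left; exists Y; auto.
  - destruct G as [a|].
    + intros _; apply glf_eq; right; right; simpl; apply le_refl.
    + intros [[]|[]].
Qed.

Lemma gident_gle G H : gident G H -> gle G H /\ gle H G.
Proof.
  revert H; induction G as [a|I J hI hJ L IHL R IHR]; intros H;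
    destruct H as [b|I' J' hI' hJ' L' R']; simpl; try (intros []; fail).
  - intros <-; split; apply gle_refl.
  - intros [h1 [h2 [h3 h4]]]; split; apply gle_eq; split; [| split | | split].
    + intros X [i <-]. destruct (h1 i) as [i' hi].
      apply glf_eq; right; left; exists (L' i'); split; [exists i'; reflexivity|].
      exact (proj1 (IHL i _ hi)).
    + intros Y [j' <-]. destruct (h4 j') as [j hj].
      apply glf_eq; left; exists (R j); split; [exists j; reflexivity|].
      exact (proj1 (IHR j _ hj)).
    + intros [[]|[]].
    + intros X [i' <-]. destruct (h2 i') as [i hi].
      apply glf_eq; right; left; exists (L i); split; [exists i; reflexivity|].
      exact (proj2 (IHL i _ hi)).
    + intros Y [j <-]. destruct (h3 j) as [j' hj].
      apply glf_eq; left; exists (R' j'); split; [exists j'; reflexivity|].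
      exact (proj2 (IHR j _ hj)).
    + intros [[]|[]].
Qed.

Lemma atom_comp (a : A) I J hI hJ (L : I -> game A) (R : J -> game A) :
  canonical (Comp I J hI hJ L R) -> gequiv (Atom a) (Comp I J hI hJ L R) -> False.
Proof.
  intros C [g1 g2]. simpl in C.
  destruct C as [CL [CR [Cdl [Cdr [Crl [Crr [Cpl Cpr]]]]]]].
  pose proof g1 as g1'. apply gle_eq in g1'. destruct g1' as [_ [_ f]].
  specialize (f (or_introl Logic.I)). apply glf_eq in f.
  destruct f as [[X [[] _]]|[[Y [[i <-] gaL]]|[]]].
  pose proof g2 as g2'. apply gle_eq in g2'. destruct g2' as [l2 _].
  specialize (l2 (L i) (ex_intro _ i erefl)). apply glf_eq in l2.
  destruct l2 as [[X [rX gXa]]|[[Y [[] _]]|hat]].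
  - generalize (Crl i). revert rX. destruct (L i) as [b|I2 J2 h1 h2 LL RR]; simpl.
    + intros [].
    + intros [r <-] h. apply (h r). exact (gle_trans _ _ _ gXa g1).
  - assert (E : L i = Atom a).
    { revert hat gaL. destruct (L i) as [b|]; simpl; [|intros []].
      intros h1 h2. apply gle_atoms in h2. f_equal. apply le_anti. rewrite h1 h2. reflexivity. }
    apply (Cpl i). rewrite E. split; assumption.
Qed.

Lemma left_match I J hI hJ (L : I -> game A) (R : J -> game A)
  I' J' hI' hJ' (L' : I' -> game A) (R' : J' -> game A) :
  canonical (Comp I J hI hJ L R) -> canonical (Comp I' J' hI' hJ' L' R') ->
  gequiv (Comp I J hI hJ L R) (Comp I' J' hI' hJ' L' R') ->
  forall i, exists i', gequiv (L i) (L' i').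
Proof.
  intros CX CY [gXY gYX] i.
  pose proof (gle_refl (Comp I J hI hJ L R)) as rX.
  pose proof (gle_refl (Comp I' J' hI' hJ' L' R')) as rY.
  simpl in CX, CY.
  destruct CX as [_ [_ [XdL [_ [XrL _]]]]].
  destruct CY as [_ [_ [YdL [_ [YrL _]]]]].
  pose proof (proj1 (proj1 (gle_eq _ _) rX) (L i) (ex_intro _ i erefl)) as f1.
  pose proof (glf_gle _ _ _ f1 gXY) as f2.
  apply glf_eq in f2. destruct f2 as [[Z [rZ gZY]]|[[W [[i' <-] gLW]]|hat]].
  - exfalso. generalize (XrL i). revert rZ. destruct (L i); simpl; [intros []|].
    intros [r <-] h. apply (h r). exact (gle_trans _ _ _ gZY gYX).
  - exists i'.
    pose proof (proj1 (proj1 (gle_eq _ _) rY) (L' i') (ex_intro _ i' erefl)) as f3.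
    pose proof (glf_gle _ _ _ f3 gYX) as f4.
    apply glf_eq in f4. destruct f4 as [[Z [rZ gZX]]|[[W [[k <-] gLk]]|hat]].
    + exfalso. generalize (YrL i'). revert rZ. destruct (L' i'); simpl; [intros []|].
      intros [r <-] h. apply (h r). exact (gle_trans _ _ _ gZX gXY).
    + have gik : gle (L i) (L k) := gle_trans _ _ _ gLW gLk.
      have idk : gident (L i) (L k).
      { apply NNPP; intro hn; exact (XdL k i hn gik). }
      split; [exact gLW | exact (gle_trans _ _ _ gLk (proj2 (gident_gle _ _ idk)))].
    + revert hat; destruct (L' i'); intros [].
  - revert hat; destruct (L i); intros [].
Qed.

Lemma right_match I J hI hJ (L : I -> game A) (R : J -> game A)
  I' J' hI' hJ' (L' : I' -> game A) (R' : J' -> game A) :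
  canonical (Comp I J hI hJ L R) -> canonical (Comp I' J' hI' hJ' L' R') ->
  gequiv (Comp I J hI hJ L R) (Comp I' J' hI' hJ' L' R') ->
  forall j, exists j', gequiv (R j) (R' j').
Proof.
  intros CX CY [gXY gYX] j.
  pose proof (gle_refl (Comp I J hI hJ L R)) as rX.
  pose proof (gle_refl (Comp I' J' hI' hJ' L' R')) as rY.
  simpl in CX, CY.
  destruct CX as [_ [_ [_ [XdR [_ [XrR _]]]]]].
  destruct CY as [_ [_ [_ [YdR [_ [YrR _]]]]]].
  pose proof (proj1 (proj2 (proj1 (gle_eq _ _) rX)) (R j) (ex_intro _ j erefl)) as f1.
  pose proof (gle_glf _ _ _ gYX f1) as f2.
  apply glf_eq in f2. destruct f2 as [[W [[j' <-] gW]]|[[Z [lZ gYZ]]|hat]].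
  - exists j'.
    pose proof (proj1 (proj2 (proj1 (gle_eq _ _) rY)) (R' j') (ex_intro _ j' erefl)) as f3.
    pose proof (gle_glf _ _ _ gXY f3) as f4.
    apply glf_eq in f4. destruct f4 as [[W [[k <-] gk]]|[[Z [lZ gXZ]]|hat]].
    + have gkj : gle (R k) (R j) := gle_trans _ _ _ gk gW.
      have idjk : gident (R j) (R k).
      { apply NNPP; intro hn; exact (XdR k j hn gkj). }
      split; [exact (gle_trans _ _ _ (proj1 (gident_gle _ _ idjk)) gk) | exact gW].
    + exfalso. generalize (YrR j'). revert lZ. destruct (R' j'); simpl; [intros []|].
      intros [l <-] h. apply (h l). exact (gle_trans _ _ _ gYX gXZ).
    + destruct hat.
  - exfalso. generalize (XrR j). revert lZ. destruct (R j); simpl; [intros []|].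
    intros [l <-] h. apply (h l). exact (gle_trans _ _ _ gXY gYZ).
  - destruct hat.
Qed.

End G.
Arguments atom_comp {d A a I J hI hJ L R} _ _.
Arguments left_match {d A I J hI hJ L R I' J' hI' hJ' L' R'} _ _ _ _.
Arguments right_match {d A I J hI hJ L R I' J' hI' hJ' L' R'} _ _ _ _.

Theorem lemma4p21 (d : Order.disp_t) (A : porderType d) (G G' : game A) :
  gequiv G G' -> canonical G -> canonical G' -> gident G G'.
Proof.
  revert G'. induction G as [a|I J hI hJ L IHL R IHR];
    intros G' E CG CG'; destruct G' as [b|I' J' hI' hJ' L' R'].
  - simpl. destruct E as [e1 e2]. apply gle_atoms in e1. apply gle_atoms in e2.
    apply le_anti. rewrite e1 e2. reflexivity.
  - exfalso; exact (atom_comp CG' E).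
  - exfalso; apply (@atom_comp _ _ b _ _ _ _ _ _ CG). destruct E; split; assumption.
  - have E' : gequiv (Comp I' J' hI' hJ' L' R') (Comp I J hI hJ L R)
      by (destruct E; split; assumption).
    pose proof CG as CG1. pose proof CG' as CG1'. simpl in CG1, CG1'.
    destruct CG1 as [CL [CR _]]. destruct CG1' as [CL' [CR' _]].
    simpl. split; [|split; [|split]].
    + intros i. destruct (left_match CG CG' E i) as [i' Ei']. exists i'. auto.
    + intros i'. destruct (left_match CG' CG E' i') as [i Ei]. exists i.
      apply IHL; auto. destruct Ei; split; assumption.
    + intros j. destruct (right_match CG CG' E j) as [j' Ej']. exists j'. auto.
    + intros j'. destruct (right_match CG' CG E' j') as [j Ej]. exists j.
      apply IHR; auto. destruct Ej; split; assumption.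
Qed.
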